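(* Let $G=(V,R,E)$ be a finite bipartite version–record graph whose version graph $\mathbb{G}$ is a DAG (possibly with merges), and let $0<\delta\le1$. Let $\hat{\mathbb{T}}$ be the version tree obtained from $\mathbb{G}$ by keeping, for each version with several incoming edges, only one incoming edge of maximum weight, and let $\hat{G}$ and $\hat R$ be as defined below. Applying LyreSplit with parameter $\delta$ to $\hat{\mathbb{T}}$ (with bipartite graph $\hat{G}$) yields a partition of $V$ whose storage cost is at most $\frac{|R|+|\hat R|}{|R|}(1+\delta)^{\ell}\cdot|R|$ and whose average checkout cost is at most $\frac1\delta\cdot\frac{|E|}{|V|}$; i.e., it is a $\left(\frac{|R|+|\hat R|}{|R|}(1+\delta)^{\ell},\frac1\delta\right)$-approximation, where $\ell$ is the recursion level at which LyreSplit terminates.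
   Context: $(v,r)\in E$ means version $v$ contains record $r$; $R(v)=\{r:(v,r)\in E\}$, $R=\bigcup_vR(v)$. The version graph $\mathbb{G}=(V,\mathbb{E})$ is a DAG whose edges go from a parent version to a derived child version, with weights $w(v_i,v_j)=|R(v_i)\cap R(v_j)|$; every non-root version has at least one parent. $\hat{G}=(V,R\cup\hat R,\hat E)$ is the bipartite graph corresponding to $\hat{\mathbb{T}}$: for a merged version $v_k$, records of $v_k$ not inherited from its retained parent are treated as newly created records in $\hat{\mathbb{T}}$ (even if equal to records of another parent); $\hat R$ is the set of these additional duplicated records, so $\hat G$ has $|R|+|\hat R|$ records and $|\hat E|=|E|$ edges, and each record's set of containing versions is a connected subtree of $\hat{\mathbb{T}}$. LyreSplit on a subtree of $\hat{\mathbb T}$ with version set $V'$, record set $R'$ (records of $\hat G$ in versions of $V'$) and edge count $|E'|$: if $|R'||V'|<|E'|/\delta$ return $V'$ as one block; otherwise remove any tree edge $e$ of the subtree with $w(e)\le\delta|R'|$ (weights computed in $\hat G$) and recurse on the two resulting subtrees. The initial call is at recursion level $0$; $\ell$ is the largest level reached. The storage cost of a partition $\mathcal{V}_1,\dots,\mathcal{V}_K$ is $\sum_k|\mathcal{R}_k|$ and the average checkout cost is $\frac1{|V|}\sum_k|\mathcal{V}_k||\mathcal{R}_k|$, where $\mathcal{R}_k$ is the set of records contained in versions of $\mathcal{V}_k$. An $(X,Y)$-approximation has storage cost at most $X|R|$ and average checkout cost at most $Y\frac{|E|}{|V|}$. *)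

(* Defs.v *)
From HB Require Import structures.
From mathcomp Require Import all_boot all_order all_algebra.
Set Implicit Arguments. Unset Strict Implicit. Unset Printing Implicit Defensive.
Import Order.TTheory GRing.Theory Num.Theory.

Section VersionGraphs.

(* V : versions, Rc : records, E v r : version v contains record r *)
Variables (V Rc : finType) (E : V -> Rc -> bool).

Definition recs_of (v : V) : {set Rc} := [set r | E v r].
Definition all_recs : {set Rc} := [set r | [exists v, E v r]].
Definition all_edges : {set V * Rc} := [set vr | E vr.1 vr.2].
Definition weight (vi vj : V) : nat := #|recs_of vi :&: recs_of vj|.

Definition block_recs (B : {set V}) : {set Rc} := [set r | [exists v in B, E v r]].
Definition storage_cost (P : seq {set V}) : nat :=
  \sum_(B <- P) #|block_recs B|.
Definition checkout_cost (K : numFieldType) (P : seq {set V}) : K :=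
  ((\sum_(B <- P) (#|B| * #|block_recs B|)%:R) / #|V|%:R)%R.

(* par : the retained parent of each version in the tree \hat T *)
Variable par : V -> option V.

Definition up_step (r : Rc) (v : V) : V :=
  match par v with
  | Some p => if E p r then p else v
  | None => v
  end.
(* origin(v, r): the version of \hat T where the copy of r held by v was
   (newly) created; (origin v r, r) identifies a record of \hat G. *)
Definition origin (v : V) (r : Rc) : V := iter #|V| (up_step r) v.

Definition hrecs_of (v : V) : {set V * Rc} :=
  [set (origin v r, r) | r in recs_of v].
(* all records of \hat G : R \cup \hat R *)
Definition hall_recs : {set V * Rc} := \bigcup_(v : V) hrecs_of v.
Definition hweight (vi vj : V) : nat := #|hrecs_of vi :&: hrecs_of vj|.
Definition sub_recs (V' : {set V}) : {set V * Rc} := \bigcup_(v in V') hrecs_of v.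
Definition sub_edges (V' : {set V}) : {set V * Rc} :=
  [set vr | (vr.1 \in V') && E vr.1 vr.2].

Definition tree_rel_minus (V' : {set V}) (p c : V) : rel V :=
  fun x y => [&& x \in V', y \in V',
               (par y == Some x) || (par x == Some y)
             & ~~ (((x == p) && (y == c)) || ((x == c) && (y == p)))].
Definition side_child (V' : {set V}) (p c : V) : {set V} :=
  [set x in V' | connect (tree_rel_minus V' p c) c x].
Definition side_parent (V' : {set V}) (p c : V) : {set V} :=
  V' :\: side_child V' p c.

Variables (K : realFieldType) (delta : K).
Local Open Scope ring_scope.

(* lyre V' k P l : the call of LyreSplit on the subtree V' at recursion
   level k can return the blocks P, the largest recursion level reached
   during this call being l.  (LyreSplit is nondeterministic.) *)
Inductive lyre : {set V} -> nat -> seq {set V} -> nat -> Prop :=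
| lyre_stop (V' : {set V}) (k : nat) :
    (#|sub_recs V'| * #|V'|)%:R < #|sub_edges V'|%:R / delta ->
    lyre V' k [:: V'] k
| lyre_split (V' : {set V}) (k : nat) (p c : V)
    (P1 P2 : seq {set V}) (l1 l2 : nat) :
    ~~ ((#|sub_recs V'| * #|V'|)%:R < #|sub_edges V'|%:R / delta) ->
    p \in V' -> c \in V' -> par c = Some p ->
    (hweight p c)%:R <= delta * #|sub_recs V'|%:R ->
    lyre (side_parent V' p c) k.+1 P1 l1 ->
    lyre (side_child V' p c) k.+1 P2 l2 ->
    lyre V' k (P1 ++ P2) (maxn l1 l2).

End VersionGraphs.

(* Main.v *)
Require Import Defs.
From HB Require Import structures.
From mathcomp Require Import all_boot all_order all_algebra.
Set Implicit Arguments. Unset Strict Implicit. Unset Printing Implicit Defensive.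
Import Order.TTheory GRing.Theory Num.Theory.

Section Tree.
Variables (V Rc : finType) (E : V -> Rc -> bool) (parent : rel V) (par : V -> option V).
Hypothesis Hdag : forall u v, parent u v -> ~~ connect parent v u.
Hypothesis Hps : forall v p, par v = Some p -> parent p v.

Definition parf (v : V) : V := odflt v (par v).

Lemma parf_conn k y : connect parent (iter k parf y) y.
Proof.
elim: k => [|k IH] /=; first exact: connect0.
apply: connect_trans _ IH; rewrite /parf; case E1: (par _) => [q|] /=.
  by apply: connect1; apply: Hps.
exact: connect0.
Qed.

Lemma acyc n z : 0 < n -> iter n parf z = z -> par z = None.
Proof.
case: n => // n _ Hit; case E1: (par z) => [q|] //; exfalso.
have Hq := Hps E1; move: (Hdag Hq); rewrite -Hit iterSr /parf E1 /=.
by rewrite parf_conn.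
Qed.

Lemma no2cyc p c : par c = Some p -> ~ exists i, iter i parf p = c.
Proof.
move=> Hc [i Hi]; have : iter i.+1 parf c = c by rewrite iterSr /parf Hc.
by move/(acyc (ltn0Sn _)); rewrite Hc.
Qed.

Lemma stab (f : V -> V) (Hf : forall z, f z != z -> par z = Some (f z)) y :
  f (iter #|V| f y) = iter #|V| f y.
Proof.
apply/eqP; apply/negPn/negP => Hnf.
have nf : forall j, j <= #|V| -> f (iter j f y) != iter j f y.
  move=> j Hj; apply: contra Hnf => /eqP Hfix.
  rewrite -(subnK Hj) iterD (iter_fix _ Hfix); exact/eqP.
have Hpf : forall j m, m + j <= #|V| -> iter m f (iter j f y) = iter m parf (iter j f y).
  move=> j; elim=> [|m IH] Hm //=.
  have Hmj : m + j <= #|V| by apply: leq_trans Hm; rewrite leq_add2r.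
  by rewrite -IH // /parf -iterD (Hf _ (nf _ Hmj)).
pose g (i : 'I_#|V|.+1) := iter i f y.
have ginj : injective g.
  have key : forall a b : nat, a < b -> b <= #|V| -> iter a f y != iter b f y.
    move=> a b Hab Hb; apply/eqP => Heq.
    have : iter (b - a) parf (iter a f y) = iter a f y.
      by rewrite -Hpf ?subnK ?(ltnW Hab) // -iterD subnK ?(ltnW Hab).
    move/(acyc _); rewrite subn_gt0 => /(_ Hab).
    by rewrite (Hf _ (nf a (leq_trans (ltnW Hab) Hb))).
  move=> a b; rewrite /g => Hab; apply/val_inj => /=.
  case: (ltngtP a b) => // H.
  - by move: (key _ _ H (ltn_ord b) ); rewrite -/(nat_of_ord a) Hab eqxx.
  - by move: (key _ _ H (ltn_ord a) ); rewrite Hab eqxx.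
by move: (leq_card g ginj); rewrite card_ord ltnn.
Qed.

Definition chain (V' : {set V}) x c :=
  exists i, iter i parf x = c /\ forall k, k <= i -> iter k parf x \in V'.
Definition Inv (V' : {set V}) := exists2 t, t \in V' & forall v, v \in V' -> chain V' v t.

Lemma chain_refl (V' : {set V}) (x : V) : x \in V' -> chain V' x x.
Proof. by move=> Hx; exists 0; split => // k; rewrite leqn0 => /eqP ->. Qed.

Lemma chain_trans (V' : {set V}) (x y z : V) : chain V' x y -> chain V' y z -> chain V' x z.
Proof.
move=> [i [Hi Hk]] [j [Hj Hk']]; exists (j + i); split; first by rewrite iterD Hi.
move=> k Hkl; case: (leqP k i) => Hki; first exact: Hk.
rewrite -(subnK (ltnW Hki)) iterD Hi; apply: Hk'.
by rewrite leq_subLR addnC.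
Qed.

Lemma chain_suffix (V' : {set V}) (x c : V) i : iter i parf x = c -> (forall k, k <= i -> iter k parf x \in V') ->
  forall k, k <= i -> chain V' (iter k parf x) c.
Proof.
move=> Hi Hk k Hki; exists (i - k); split; first by rewrite -iterD subnK.
move=> m Hm; rewrite -iterD; apply: Hk; by rewrite -(subnK Hki) leq_add2r.
Qed.

Lemma chain_prefix (V' : {set V}) (x : V) i : (forall k, k <= i -> iter k parf x \in V') ->
   chain V' x (iter i parf x).
Proof. by move=> Hk; exists i. Qed.

Lemma conn_ind (e : rel V) (Pr : V -> Prop) a b :
  connect e a b -> Pr a -> (forall x y, Pr x -> e x y -> Pr y) -> Pr b.
Proof.
move/connectP=> [s]; elim: s a => [|y s IH] a /=; first by move=> _ -> .
by move=> /andP [Hay Hp] Hl Pa Hstep; apply: (IH y) => //; exact: Hstep Pa Hay.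
Qed.

Lemma child_chain (V' : {set V}) (p c x : V) : par c = Some p ->
  x \in side_child par V' p c -> chain V' x c.
Proof.
move=> Hc; rewrite inE => /andP [xV Hcon].
apply: (conn_ind (Pr := fun y => chain V' y c) Hcon).
  by apply: chain_refl; move: Hcon; case/connectP => [[|y s]] /= => [_ <-|/andP[/andP[]]].
move=> a b Hch /and4P [aV bV Hedge Hex].
case/orP: Hedge => /eqP Hpar.
  apply: chain_trans Hch; exists 1; split; first by rewrite /= /parf Hpar.
  by move=> [|[|k]] // _; rewrite /= ?/parf ?Hpar.
case: Hch => [[|i] [Hi Hk]].
  move: Hi => /= Hac; rewrite Hac Hc in Hpar; case: Hpar => Hpb.
  by move: Hex; rewrite Hac Hpb !eqxx /= orbT.
have := chain_suffix Hi Hk (isT : 1 <= i.+1).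
by rewrite /= /parf Hpar.
Qed.

Lemma chain_child (V' : {set V}) (p c x : V) : par c = Some p -> chain V' x c -> x \in side_child par V' p c.
Proof.
move=> Hc [i [Hi Hk]]; elim: i x Hi Hk => [|i IH] x Hi Hk.
  by rewrite inE -Hi (Hk 0 isT) /= connect0.
have xV := Hk 0 isT; case: (eqVneq x c) => [Exc|Hxc].
  by rewrite inE -Exc xV connect0.
have Hy : parf x \in side_child par V' p c.
  apply: IH; first by rewrite -iterSr.
  by move=> k Hk'; rewrite -iterSr; apply: Hk.
rewrite inE xV /=; move: Hy; rewrite inE => /andP [yV Hcy].
apply: connect_trans Hcy _; apply: connect1.
case E1: (par x) => [q|]; last first.
  have Hfx : parf x = x by rewrite /parf E1.
  by move: Hi; rewrite iter_fix // => /eqP; rewrite (negbTE Hxc).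
have Hq : parf x = q by rewrite /parf E1.
rewrite /tree_rel_minus yV xV Hq E1 eqxx /= (negbTE Hxc) andbF /=.
apply/negP => /andP [/eqP Hqc /eqP Hxp]; subst.
by apply: (no2cyc Hc); exists 1; rewrite /= /parf E1.
Qed.

Lemma Inv_child (V' : {set V}) (p c : V) : par c = Some p -> c \in V' -> Inv (side_child par V' p c).
Proof.
move=> Hc cV; exists c; first by apply: chain_child Hc (chain_refl cV).
move=> v /(child_chain Hc) [i [Hi Hk]]; exists i; split => // k Hki.
exact: chain_child Hc (chain_suffix Hi Hk Hki).
Qed.

Lemma Inv_parent (V' : {set V}) (p c : V) : Inv V' -> par c = Some p -> p \in V' ->
  Inv (side_parent par V' p c).
Proof.
move=> [t tV Ht] Hc pV.
have nopc : ~ chain V' p c by move=> [i [Hi _]]; apply: (no2cyc Hc); exists i.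
exists t.
  rewrite inE tV andbT; apply/negP => /(child_chain Hc) Htc.
  by apply: nopc; apply: chain_trans (Ht _ pV) Htc.
move=> v; rewrite inE => /andP [vnc vV]; case: (Ht _ vV) => j [Hj Hk].
exists j; split => // k Hkj; rewrite inE Hk // andbT.
apply/negP => /(child_chain Hc) Hkc; move/negP: vnc; apply.
apply: chain_child Hc (chain_trans _ Hkc); apply: chain_prefix => m Hm.
exact: Hk (leq_trans Hm Hkj).
Qed.

Lemma L_desc (V' : {set V}) (p c u o : V) m : Inv V' -> par c = Some p -> u \in V' ->
  o \in side_child par V' p c -> iter m parf u = o -> u \in side_child par V' p c.
Proof.
move=> [t tV Ht] Hc uV Ho Hm; apply: (chain_child Hc).
have Hoc := child_chain Hc Ho.
have oV : o \in V' by move: Ho; rewrite inE => /andP [].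
apply: chain_trans Hoc; case: (Ht _ uV) => j [Hj Hk].
case: (leqP m j) => Hmj.
  rewrite -Hm; apply: chain_prefix => k Hkm; exact: Hk (leq_trans Hkm Hmj).
case: (Ht _ oV) => j' [Hj' _].
have Hot : iter (m - j) parf t = o by rewrite -Hj -iterD subnK ?(ltnW Hmj).
have : iter (j' + (m - j)) parf t = t by rewrite iterD Hot.
move/acyc; rewrite addn_gt0 subn_gt0 Hmj orbT => /(_ isT) Htn.
have Htf : parf t = t by rewrite /parf Htn.
rewrite -Hot (iter_fix _ Htf) -Hj; apply: chain_prefix => k Hkj; exact: Hk.
Qed.

Lemma mem_hrecs v (x : V * Rc) :
  (x \in hrecs_of E par v) = E v x.2 && (origin E par v x.2 == x.1).
Proof.
apply/imsetP/andP => [[r]|[H1 /eqP H2]].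
  by rewrite inE => Hr ->; rewrite /= Hr eqxx.
by exists x.2; [rewrite inE | rewrite H2; case: x {H1 H2}].
Qed.

Lemma up_cases r z : up_step E par r z != z ->
  par z = Some (up_step E par r z) /\ E (up_step E par r z) r.
Proof.
rewrite /up_step; case E1: (par z) => [q|]; last by rewrite eqxx.
by case Eq: (E q r); rewrite ?eqxx.
Qed.

Lemma origin_anc r v : exists m, origin E par v r = iter m parf v.
Proof.
rewrite /origin; elim: #|V| => [|n [m Hm]]; first by exists 0.
rewrite /= Hm /up_step; case E1: (par (iter m parf v)) => [q|]; last by exists m.
case: (E q r); last by exists m.
by exists m.+1; rewrite /= /parf E1.
Qed.

Lemma originF2 r v : up_step E par r v = v -> origin E par v r = v.
Proof. by move=> H; rewrite /origin iter_fix. Qed.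

Lemma originF1 r v q : par v = Some q -> E q r -> origin E par v r = origin E par q r.
Proof.
move=> Hv Hq; have Hup : up_step E par r v = q by rewrite /up_step Hv Hq.
rewrite /origin -Hup -iterSr iterS stab //.
by move=> z /up_cases [].
Qed.

Lemma key (V' : {set V}) (p c : V) : Inv V' -> p \in V' -> c \in V' -> par c = Some p ->
  sub_recs E par (side_parent par V' p c) :&: sub_recs E par (side_child par V' p c)
  \subset hrecs_of E par p :&: hrecs_of E par c.
Proof.
move=> HI pV cV Hc; apply/subsetP => [[o r]].
rewrite !inE => /andP [/bigcupP [u uP Hu] /bigcupP [w wC Hw]].
rewrite !mem_hrecs /= in Hu Hw *.
move: Hu Hw => /andP [Eur /eqP Hou] /andP [Ewr /eqP How].
move: uP; rewrite inE => /andP [unC uV].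
have noo : o \notin side_child par V' p c.
  apply/negP => Ho; case: (origin_anc r u) => m Hm; rewrite Hou in Hm.
  by have := L_desc HI Hc uV Ho (esym Hm); rewrite (negbTE unC).
have step : forall z, E z r -> origin E par z r = o -> z != o ->
    exists q, par z = Some q /\ E q r /\ origin E par q r = o.
  move=> z Ez Oz Hzo.
  have Hup : up_step E par r z != z.
    by apply: contra Hzo => /eqP H; rewrite -Oz originF2.
  case: (up_cases Hup) => H1 H2; exists (up_step E par r z); split => //; split => //.
  by rewrite -(originF1 H1 H2).
case: (child_chain Hc wC) => i [Hi Hk].
have all : forall k, k <= i -> E (iter k parf w) r /\ origin E par (iter k parf w) r = o.
  elim=> [|k IH] Hki; first by [].
  case: (IH (ltnW Hki)) => Ez Oz.
  have Hzc : iter k parf w \in side_child par V' p c.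
    exact: chain_child Hc (chain_suffix Hi Hk (ltnW Hki)).
  have Hzo : iter k parf w != o by apply: contraNneq noo => <-.
  case: (step _ Ez Oz Hzo) => q [Hq [Eq Oq]].
  by have -> : iter k.+1 parf w = q by rewrite /= /parf Hq.
case: (all i (leqnn i)); rewrite Hi => Ec Oc.
have Hco : c != o.
  by apply: contraNneq noo => <-; exact: chain_child Hc (chain_refl cV).
case: (step _ Ec Oc Hco) => q [Hq [Eq Oq]]; move: Hq; rewrite Hc => [[Hpq]].
by rewrite -Hpq in Eq Oq; rewrite Ec Oc Eq Oq eqxx.
Qed.

End Tree.

Section Count.
Variables (V Rc : finType) (E : V -> Rc -> bool) (parent : rel V) (par : V -> option V).
Hypothesis Hdag : forall u v, parent u v -> ~~ connect parent v u.
Hypothesis Hps : forall v p, par v = Some p -> parent p v.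
Variables (K : realFieldType) (delta : K).
Hypothesis Hd : (0 < delta)%R.
Local Open Scope ring_scope.

Lemma se_sub (A B : {set V}) : A \subset B -> sub_edges E A \subset sub_edges E B.
Proof.
move/subsetP=> H; apply/subsetP => x; rewrite !inE => /andP [H1 H2].
by rewrite H2 (H _ H1).
Qed.

Lemma sr_sub (A B : {set V}) : A \subset B -> sub_recs E par A \subset sub_recs E par B.
Proof.
move/subsetP=> H; apply/subsetP => x /bigcupP [v vA Hx].
by apply/bigcupP; exists v => //; apply: H.
Qed.

Lemma child_sub (V' : {set V}) p c : side_child par V' p c \subset V'.
Proof. by apply/subsetP => x; rewrite inE => /andP []. Qed.

Lemma parent_sub (V' : {set V}) p c : side_parent par V' p c \subset V'.
Proof. exact: subsetDl. Qed.

Lemma pc_disj (V' : {set V}) p c :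
  side_parent par V' p c :&: side_child par V' p c = set0.
Proof.
apply/setP => x; rewrite in_setI in_setD in_set0.
by rewrite andbAC andNb.
Qed.

Lemma checkout_rec V' k P l : lyre E par delta V' k P l ->
  (\sum_(B <- P) (#|B| * #|sub_recs E par B|))%:R <= #|sub_edges E V'|%:R / delta.
Proof.
elim => {V' k P l} [V' k Hlt | V' k p c P1 P2 l1 l2 _ pV cV Hc _ _ IH1 _ IH2].
  by rewrite big_seq1 mulnC; apply: ltW.
rewrite big_cat natrD; apply: le_trans (lerD IH1 IH2) _.
rewrite -mulrDl -natrD; apply: ler_wpM2r; first by rewrite invr_ge0 ltW.
rewrite ler_nat -cardsUI.
have -> : sub_edges E (side_parent par V' p c) :&: sub_edges E (side_child par V' p c) = set0.
  apply/setP => x; rewrite !inE.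
  by case: (x.1 \in V'); case: (connect (tree_rel_minus par V' p c) c x.1); rewrite /= ?andbF.
rewrite cards0 addn0; apply: subset_leq_card.
by rewrite subUset !se_sub ?child_sub ?parent_sub.
Qed.

Lemma storage_rec V' k P l : lyre E par delta V' k P l -> Inv par V' ->
  (k <= l)%N /\
  (\sum_(B <- P) #|sub_recs E par B|)%:R <= #|sub_recs E par V'|%:R * (1 + delta) ^+ (l - k).
Proof.
elim => {V' k P l} [V' k _ | V' k p c P1 P2 l1 l2 _ pV cV Hc Hw _ IH1 _ IH2] HI.
  by split => //; rewrite big_seq1 subnn expr0 mulr1.
have [Hk1 S1] := IH1 (Inv_parent Hdag Hps HI Hc pV).
have [Hk2 S2] := IH2 (Inv_child Hdag Hps Hc cV).
set L := maxn l1 l2.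
have HkL : (k < L)%N by rewrite (leq_trans Hk1) // leq_maxl.
split; first exact: ltnW.
set q := 1 + delta.
have q1 : 1 <= q by rewrite lerDl ltW.
have q0 : 0 <= q by apply: le_trans q1.
have e1 : q ^+ (l1 - k.+1) <= q ^+ (L - k.+1) by apply: ler_weXn2l => //; rewrite leq_sub2r // leq_maxl.
have e2 : q ^+ (l2 - k.+1) <= q ^+ (L - k.+1) by apply: ler_weXn2l => //; rewrite leq_sub2r // leq_maxr.
rewrite -(subnSK HkL) exprS big_cat natrD.
set a1 := #|sub_recs E par (side_parent par V' p c)|.
set a2 := #|sub_recs E par (side_child par V' p c)|.
set a := #|sub_recs E par V'|.
have Hnat : (a1 + a2 <= a + hweight E par p c)%N.
  rewrite /a1 /a2 -cardsUI leq_add //.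
    by apply: subset_leq_card; rewrite subUset !sr_sub ?child_sub ?parent_sub.
  by rewrite /hweight; apply: subset_leq_card; exact: (@key _ _ E parent par Hdag Hps _ _ _ HI pV cV Hc).
have HK : a1%:R + a2%:R <= q * a%:R :> K.
  rewrite -natrD; apply: le_trans (_ : (a + hweight E par p c)%:R <= _).
    by rewrite ler_nat.
  by rewrite natrD /q mulrDl mul1r lerD2l.
apply: le_trans (lerD (le_trans S1 (ler_wpM2l (ler0n _ _) e1))
                      (le_trans S2 (ler_wpM2l (ler0n _ _) e2))) _.
rewrite -mulrDl mulrA [a%:R * q]mulrC.
apply: ler_wpM2r => //; exact: exprn_ge0.
Qed.

End Count.

Unset Implicit Arguments.
Local Open Scope ring_scope.

Theorem theorem3
  (K : realFieldType) (V Rc : finType) (E : V -> Rc -> bool)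
  (parent : rel V) (par : V -> option V) (delta : K)
  (* the version graph is a DAG *)
  (Hdag : forall u v, parent u v -> ~~ connect parent v u)
  (* with a single root; every non-root version has a parent *)
  (Hroot : exists r0 : V, forall v, (~~ [exists u, parent u v]) = (v == r0) :> bool)
  (* \hat T keeps, for each version with parents, one incoming edge of
     maximum weight *)
  (Hpar_none : forall v, par v = None <-> ~~ [exists u, parent u v])
  (Hpar_some : forall v p, par v = Some p ->
       parent p v /\ (forall q, parent q v -> (weight E q v <= weight E p v)%N))
  (Hdelta : 0 < delta <= 1)
  (P : seq {set V}) (l : nat)
  (Hrun : lyre E par delta [set: V] 0 P l) :
  let nR := #|all_recs E|%:R : K in
  let nRhat := #|hall_recs E par|%:R - nR : K in
  (storage_cost E P)%:R <= (nR + nRhat) / nR * (1 + delta) ^+ l * nR /\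
  checkout_cost E K P <= delta^-1 * (#|all_edges E|%:R / #|V|%:R).
Proof.
move=> nR nRhat.
have Hps : forall v p, par v = Some p -> parent p v by move=> v p /Hpar_some [].
have Hd : 0 < delta by case/andP: Hdelta.
have Hbr : forall B, (#|block_recs E B| <= #|sub_recs E par B|)%N.
  move=> B; apply: leq_trans (leq_imset_card (fun x : V * Rc => x.2) (sub_recs E par B)).
  apply: subset_leq_card; apply/subsetP => r; rewrite inE => /existsP [v /andP [vB Evr]].
  apply/imsetP; exists (origin E par v r, r) => //.
  by apply/bigcupP; exists v => //; rewrite mem_hrecs /= Evr eqxx.
split.
  have HI : Inv par [set: V].
    case: Hroot => r0 Hr0; exists r0 => // v _.
    exists #|V|; split => //.
    have Hf : forall z, parf par z != z -> par z = Some (parf par z).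
      by move=> z; rewrite /parf; case: (par z) => //=; rewrite eqxx.
    have Hst := stab Hdag Hps Hf v.
    move: Hst; set z := iter #|V| (parf par) v => Hst.
    have Hz : par z = None.
      case E1: (par z) => [q|] //; move: Hst; rewrite /parf E1 /= => Hqz.
      by move: (Hdag _ _ (Hps _ _ E1)); rewrite Hqz connect0.
    by move/Hpar_none: Hz; rewrite Hr0 => /eqP.
  have [_ S] := storage_rec Hdag Hps Hd Hrun HI.
  have H1 : (storage_cost E P <= \sum_(B <- P) #|sub_recs E par B|)%N.
    by apply: leq_sum => B _; apply: Hbr.
  have H2 : (#|sub_recs E par [set: V]| <= #|hall_recs E par|)%N.
    apply: subset_leq_card; apply/subsetP => x /bigcupP [v _ Hx].
    by apply/bigcupP; exists v.
  have Hst : (storage_cost E P)%:R <= #|hall_recs E par|%:R * (1 + delta) ^+ l :> K.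
    apply: le_trans (_ : (\sum_(B <- P) #|sub_recs E par B|)%:R <= _).
      by rewrite ler_nat.
    apply: le_trans S _; rewrite subn0; apply: ler_wpM2r.
      by apply: exprn_ge0; rewrite addr_ge0 // ltW.
    by rewrite ler_nat.
  rewrite /nRhat addrC subrK.
  case: (eqVneq nR 0) => HnR; last by rewrite mulrAC divfK.
  have H0 : #|all_recs E| = 0%N by apply/eqP; rewrite -(pnatr_eq0 K) -/nR HnR.
  have -> : storage_cost E P = 0%N.
    rewrite /storage_cost big1_seq // => B _; apply/eqP; rewrite -leqn0 -H0.
    apply: subset_leq_card; apply/subsetP => r; rewrite !inE => /existsP [v /andP [_ H]].
    by apply/existsP; exists v.
  by rewrite HnR !mulr0.
rewrite /checkout_cost.
have C := checkout_rec Hd Hrun.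
rewrite mulrA [delta^-1 * _]mulrC; apply: ler_wpM2r; first by rewrite invr_ge0 ler0n.
rewrite -natr_sum.
apply: le_trans (_ : (\sum_(B <- P) (#|B| * #|sub_recs E par B|))%:R <= _).
  by rewrite ler_nat; apply: leq_sum => B _; apply: leq_mul.
have -> : all_edges E = sub_edges E [set: V] by apply/setP => x; rewrite !inE.
exact: C.
Qed.
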